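(* Let $\lambda^*(q,K,C)$ denote the critical virality weight for story precision $q\in(1/2,1)$, news-feed size $K$, and capacity $C$ (considering only admissible triples, with integers $1\le C\le K/2$). Then: (i) $\lambda^*(q',K,C)\ge\lambda^*(q,K,C)$ if $q'>q$; (ii) $\lambda^*(q,K,C')\ge\lambda^*(q,K,C)$ if $C'<C$; (iii) $\lambda^*(q,K-2,C)\ge\lambda^*(q,K,C)$ for every $K$; (iv) $\lambda^*(q,K+1,C)\ge\lambda^*(q,K,C)$ if $K$ is odd; (v) $\lambda^*(q,K-1,C)\ge\lambda^*(q,K,C)$ if $K$ is odd. All of these inequalities are strict whenever $\lambda^*(q,K,C)$ is finite.
   Context: For parameters $q\in(1/2,1)$, integers $K\ge1$, $1\le C\le K/2$, and $\lambda\in[0,1]$, let $P_k(x,\lambda)=\mathbb{P}[\mathrm{Binom}(K,\lambda x+(1-\lambda)q)=k]$ for $x\in[0,1]$, and define the majority-rule inflow accuracy function $$\phi_{\sigma^{\mathrm{maj}}}(x)=\frac{q+C\sum_{k>K/2}P_k(x,\lambda)+qC\,P_{K/2}(x,\lambda)}{1+C},$$ where the term $P_{K/2}$ is present only when $K$ is even. (This is the expected fraction of new popularity score going to correct stories when agents, who share $C$ feed stories and post their own story of precision $q$, use the majority rule: share $C$ stories of the feed majority, breaking ties in favor of the own story.) The critical virality weight is $\lambda^*(q,K,C)=\inf\{\lambda\in[0,1]:\phi_{\sigma^{\mathrm{maj}}}(x)=x\text{ for some }x\in[0,1/2]\}$, with $\lambda^*=\infty$ if this set is empty. *)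

(* Defs.v *)
From HB Require Import structures.
From mathcomp Require Import all_boot all_order all_algebra.
From mathcomp Require Import all_classical all_reals ereal.
Set Implicit Arguments. Unset Strict Implicit. Unset Printing Implicit Defensive.
Import Order.TTheory GRing.Theory Num.Theory.
Local Open Scope classical_set_scope.
Local Open Scope ring_scope.

Section Defs.
Variable R : realType.

Definition binom_prob (K k : nat) (p : R) : R :=
  'C(K, k)%:R * p ^+ k * (1 - p) ^+ (K - k).

Definition Pk (q : R) (K : nat) (lam x : R) (k : nat) : R :=
  binom_prob K k (lam * x + (1 - lam) * q).

Definition phi_maj (q : R) (K C : nat) (lam x : R) : R :=
  (q + C%:R * (\sum_(k < K.+1 | (K < 2 * k)%N) Pk q K lam x k)
     + (if ~~ odd K then q * C%:R * Pk q K lam x K./2 else 0))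
  / (1 + C%:R).

(* critical virality weight; ereal_inf of the empty set is +oo *)
Definition lambda_star (q : R) (K C : nat) : \bar R :=
  ereal_inf [set (lam%:E)%E | lam in
    [set lam : R | 0 <= lam <= 1 /\
       exists x : R, 0 <= x <= 1 / 2 /\ phi_maj q K C lam x = x]].

Definition admissible (q : R) (K C : nat) : Prop :=
  1 / 2 < q < 1 /\ (1 <= C)%N /\ (2 * C <= K)%N.

End Defs.

(* Main.v *)
Require Import Defs.
From HB Require Import structures.
From mathcomp Require Import all_boot all_order all_algebra.
From mathcomp Require Import all_classical all_reals ereal.
From mathcomp Require Import all_analysis.
From mathcomp Require Import ring lra zify.
Import Order.TTheory GRing.Theory Num.Theory Num.Def numFieldNormedType.Exports.
Local Open Scope ring_scope.

Lemma bp_ge0 {R : realType} n k (p : R) : 0 <= p <= 1 -> 0 <= binom_prob n k p.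
Proof.
move=> /andP[p0 p1]; rewrite /binom_prob.
by rewrite !mulr_ge0 // exprn_ge0 // subr_ge0.
Qed.

Lemma bp_gt0 {R : realType} n k (p : R) : 0 < p < 1 -> (k <= n)%N -> 0 < binom_prob n k p.
Proof.
move=> /andP[p0 p1] kn; rewrite /binom_prob.
rewrite !mulr_gt0 // ?exprn_gt0 // ?subr_gt0 // ltr0n bin_gt0 //.
Qed.

Lemma bp_out {R : realType} n k (p : R) : (n < k)%N -> binom_prob n k p = 0.
Proof. by move=> nk; rewrite /binom_prob bin_small // !mul0r. Qed.

Lemma bp_S0 {R : realType} n (p : R) : binom_prob n.+1 0 p = (1 - p) * binom_prob n 0 p.
Proof. by rewrite /binom_prob !bin0 !expr0 !subn0 exprS; ring. Qed.

Lemma bp_SS {R : realType} n k (p : R) :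
  binom_prob n.+1 k.+1 p = (1 - p) * binom_prob n k.+1 p + p * binom_prob n k p.
Proof.
rewrite /binom_prob binS natrD subSS.
have [kn|nk] := leqP k.+1 n.
  have -> : (n - k = (n - k.+1).+1)%N by lia.
  rewrite !exprS; ring.
rewrite bin_small // (_ : (n - k = 0)%N); last lia.
have -> : (n - k.+1 = 0)%N by lia.
rewrite !expr0 exprS; ring.
Qed.

Lemma bp_ratio {R : realType} n k (p : R) :
  (1 - p) * binom_prob n k.+1 p * k.+1%:R = p * binom_prob n k p * (n - k)%:R.
Proof.
rewrite /binom_prob.
have H := mul_bin_left n k.
have [kn|nk] := leqP k.+1 n.
  have -> : (n - k = (n - k.+1).+1)%N by lia.
  have H' : ('C(n, k.+1) * k.+1 = (n - k.+1).+1 * 'C(n, k))%N by rewrite mulnC H; congr (_ * _)%N; lia.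
  have H'' : ('C(n, k.+1)%:R * k.+1%:R = (n - k.+1).+1%:R * 'C(n, k)%:R :> R) by rewrite -!natrM H'.
  rewrite !exprS.
  transitivity (('C(n, k.+1)%:R * k.+1%:R) * p ^+ k * p * (1 - p) ^+ (n - k.+1) * (1 - p) :> R); first ring.
  rewrite H''; ring.
have -> : (n - k = 0)%N by lia.
by rewrite mulr0 bin_small // !mul0r mulr0 mul0r.
Qed.

Definition T {R : realType} n j (p : R) := \sum_(j <= k < n.+1) binom_prob n k p.

Lemma T_split {R : realType} n j (p : R) : T n j p = binom_prob n j p + T n j.+1 p.
Proof.
rewrite /T; have [jn|nj] := leqP j n.
  by rewrite big_ltn // ltnS.
by rewrite !big_geq ?bp_out ?addr0 //; lia.
Qed.

Lemma T_big {R : realType} n j (p : R) : (n < j)%N -> T n j p = 0.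
Proof. by move=> nj; rewrite /T big_geq. Qed.

Lemma T_S {R : realType} n j (p : R) : T n.+1 j.+1 p = T n j.+1 p + p * binom_prob n j p.
Proof.
move: (leqnn (n.+1 - j)%N); move: {2}(n.+1 - j)%N => d.
elim: d j => [|d IH] j hd.
  rewrite !T_big ?bp_out; [by rewrite mulr0 addr0|lia|lia|lia].
have [jn|nj] := leqP j n; last first.
  rewrite !T_big ?bp_out; [by rewrite mulr0 addr0|lia|lia|lia].
rewrite T_split IH; last lia.
rewrite bp_SS (T_split n j.+1); ring.
Qed.

Lemma T_0 {R : realType} n (p : R) : T n 0 p = 1.
Proof.
elim: n => [|n IH].
  by rewrite T_split T_big // /binom_prob bin0 !expr0 !mulr1 addr0.
rewrite -IH (T_split n.+1 0) T_S bp_S0 (T_split n 0); ring.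
Qed.

Lemma T_ge0 {R : realType} n j (p : R) : 0 <= p <= 1 -> 0 <= T n j p.
Proof. by move=> hp; rewrite /T sumr_ge0 // => k _; exact: bp_ge0. Qed.

Lemma T_mono {R : realType} n j (p p' : R) : 0 <= p -> p <= p' -> p' <= 1 ->
  T n j p <= T n j p'.
Proof.
move=> p0 pp p1; elim: n j => [|n IH] j.
  case: j => [|j]; first by rewrite !T_0.
  by rewrite !T_big.
case: j => [|j]; first by rewrite !T_0.
rewrite !T_S.
have Ea : forall r : R, binom_prob n j r = T n j r - T n j.+1 r.
  by move=> r; rewrite (T_split n j r); ring.
rewrite !Ea.
have h1 := IH j; have h2 := IH j.+1.
have h3 : T n j.+1 p <= T n j p.
  have := @bp_ge0 R n j p; rewrite (T_split n j p) p0 (le_trans pp p1) /=; lra.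
have : 0 <= (1 - p') * (T n j.+1 p' - T n j.+1 p) + p' * (T n j p' - T n j p)
         + (p' - p) * (T n j p - T n j.+1 p).
  rewrite !addr_ge0 // mulr_ge0 //; lra.
nra.
Qed.

Lemma bp_refl {R : realType} n k : (k <= n)%N ->
  binom_prob n k (1/2 : R) = binom_prob n (n - k) (1/2).
Proof.
move=> kn; rewrite /binom_prob bin_sub // subKn //.
have -> : 1 - 1/2 = 1/2 :> R by field.
ring.
Qed.

Lemma T_sym {R : realType} n j : (j <= n.+1)%N ->
  T n j (1/2 : R) + T n (n.+1 - j) (1/2) = 1.
Proof.
elim: n j => [|n IH] j hj.
  case: j hj => [|[|j]] // _.
    by rewrite subn0 T_0 T_big // addr0.
  by rewrite subnn T_0 T_big // add0r.
case: j hj => [|j] hj.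
  by rewrite subn0 T_0 T_big // addr0.
have [jn|nj] := leqP j n; last first.
  have -> : j = n.+1 by lia.
  by rewrite subnn T_0 T_big // add0r.
have -> : (n.+2 - j.+1 = (n - j).+1)%N by lia.
rewrite !T_S.
have := IH j.+1 (jn : (j.+1 <= n.+1)%N).
have -> : (n.+1 - j.+1 = n - j)%N by lia.
move=> H; rewrite (T_split n (n - j)) in H.
rewrite (@bp_refl R n j jn) -[RHS]H; by field.
Qed.

Definition Mq {R : realType} K (q p : R) :=
  T K (K./2).+1 p + (if ~~ odd K then q * binom_prob K K./2 p else 0).

Lemma sum_T {R : realType} K (p : R) :
  \sum_(k < K.+1 | (K < 2 * k)%N) binom_prob K k p = T K (K./2).+1 p.
Proof.
rewrite /T big_geq_mkord; apply: eq_bigl => k /=.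
by rewrite mul2n -ltn_half_double.
Qed.

Lemma phiE {R : realType} (q : R) K C lam x :
  phi_maj q K C lam x = (q + C%:R * Mq K q (lam * x + (1 - lam) * q)) / (1 + C%:R).
Proof.
rewrite /phi_maj /Mq /Pk sum_T; case: (odd K) => /=; first by rewrite !addr0.
congr (_ / _); ring.
Qed.

Lemma Mq_even {R : realType} K (q p : R) : ~~ odd K ->
  Mq K q p = (1 - q) * T K K./2.+1 p + q * T K K./2 p.
Proof. by move=> hK; rewrite /Mq hK (T_split K K./2); ring. Qed.

Lemma Mq_odd {R : realType} K (q p : R) : odd K -> Mq K q p = T K K./2.+1 p.
Proof. by move=> hK; rewrite /Mq hK addr0. Qed.

Lemma Mq_mono_p {R : realType} K (q p p' : R) : 0 <= p -> p <= p' -> p' <= 1 ->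
  0 <= q <= 1 -> Mq K q p <= Mq K q p'.
Proof.
move=> p0 pp p1 /andP[q0 q1].
have h1 := @T_mono R K K./2.+1 p p' p0 pp p1; have h2 := @T_mono R K K./2 p p' p0 pp p1.
case hK: (odd K); first by rewrite !Mq_odd.
rewrite !Mq_even ?hK //.
rewrite lerD // ler_wpM2l //; lra.
Qed.

Lemma Mq_mono_q {R : realType} K (q q' p : R) : 0 <= p <= 1 -> q <= q' ->
  Mq K q p <= Mq K q' p.
Proof.
move=> hp qq; rewrite /Mq lerD2l; case: (odd K) => //=.
by rewrite ler_wpM2r // bp_ge0.
Qed.

Lemma Mq_ge0 {R : realType} K (q p : R) : 0 <= p <= 1 -> 0 <= q -> 0 <= Mq K q p.
Proof.
move=> hp q0; rewrite /Mq addr_ge0 ?T_ge0 //; case: (odd K) => //=.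
by rewrite mulr_ge0 // bp_ge0.
Qed.

Lemma Mq_half {R : realType} K (q : R) : 1/2 <= q -> 1/2 <= Mq K q (1/2).
Proof.
move=> hq.
have hk : (K./2.+1 <= K.+1)%N by have := odd_double_half K; lia.
have hh : 0 <= (1/2 : R) <= 1 by apply/andP; split; lra.
case hK: (odd K).
  rewrite Mq_odd //.
  have := @T_sym R K (K./2).+1.
  have -> : (K.+1 - K./2.+1 = K./2.+1)%N.
    have := odd_double_half K; rewrite hK /=; lia.
  move=> H; have := H hk; lra.
have := @T_sym R K (K./2).+1.
have -> : (K.+1 - K./2.+1 = K./2)%N.
  have := odd_double_half K; rewrite hK /=; lia.
move=> H; have {}H := H hk.
rewrite /Mq hK /=.
have := T_split K K./2 (1/2 : R).
have := @bp_ge0 R K K./2 (1/2) hh.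
nra.
Qed.

Lemma Mq_ge_half {R : realType} K (q p : R) : 1/2 <= p <= 1 -> 1/2 <= q <= 1 ->
  1/2 <= Mq K q p.
Proof.
move=> /andP[p0 p1] /andP[q0 q1].
apply: (le_trans (@Mq_half R K q q0)); apply: Mq_mono_p => //; try lra.
Qed.

Local Open Scope classical_set_scope.

Definition Sset {R : realType} (f : R -> R -> R) :=
  [set lam : R | 0 <= lam <= 1 /\ exists x : R, 0 <= x <= 1 / 2 /\ f lam x = x].

Lemma Sset_closed {R : realType} (G : R -> R -> R) :
  continuous (fun z : R * R => G z.1 z.2) -> closed (Sset G).
Proof.
move=> Gc.
set Z := (`[0, 1] `*` `[0, 1/2]) `&` ((fun z : R * R => G z.1 z.2 - z.2) @^-1` [set 0]).
have cZ : compact Z.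
  apply: compact_closedI.
    by apply: compact_setX; exact: segment_compact.
  apply: preimage_closed; last exact: closed_eq.
  move=> z _; apply: continuousB; first exact: Gc.
  exact: cvg_snd.
have -> : Sset G = fst @` Z.
  apply/seteqP; split.
    move=> l [hl [x [hx e]]]; exists (l, x) => //; split.
      by split; rewrite /= in_itv /=.
    by rewrite /= e subrr.
  move=> l [[l' x] [[/= h1 h2] /= e] <-] /=.
  rewrite in_itv /= in h1; rewrite in_itv /= in h2.
  split => //; exists x; split => //.
  by apply/eqP; rewrite -subr_eq0; apply/eqP.
apply: compact_closed; first exact: Rhausdorff.
apply: continuous_compact => //.
apply: continuous_subspaceT => z; exact: cvg_fst.
Qed.

Lemma inS {R : realType} (F : R -> R -> R) l x :
  0 <= l <= 1 -> 0 <= x <= 1/2 -> continuous (F l) -> F l x < x -> 1/2 < F l (1/2) ->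
  Sset F l.
Proof.
move=> hl /andP[x0 x1] Fc Fx Fh.
have hv : minr (F l x - x) (F l (1/2) - 1/2) <= 0 <= maxr (F l x - x) (F l (1/2) - 1/2).
  by rewrite ge_min le_max; apply/andP; split; apply/orP; [left|right]; lra.
have hc0 : {within `[x, 1/2], continuous (fun y => F l y - y)}.
  apply: continuous_subspaceT => y; apply: continuousB; [exact: Fc| exact: cvg_id].
have [c hc e] := @IVT R (fun y => F l y - y) x (1/2) 0 x1 hc0 hv.
split => //; exists c; split.
  by rewrite in_itv /= in hc; case/andP: hc => ? ?; apply/andP; split; lra.
by apply/eqP; rewrite -subr_eq0; apply/eqP.
Qed.

Lemma compare {R : realType} (F G : R -> R -> R) :
  (forall l, continuous (F l)) ->
  (forall x, continuous (F^~ x)) ->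
  continuous (fun z : R * R => G z.1 z.2) ->
  (forall l, 0 <= l <= 1 -> 1/2 < F l (1/2)) ->
  (forall x, 0 <= x <= 1/2 -> G 0 x != x) ->
  (forall l x, 0 <= l <= 1 -> 0 <= x <= 1/2 -> G l x = x -> F l x < x) ->
  (ereal_inf (EFin @` Sset F) <= ereal_inf (EFin @` Sset G))%E /\
  (ereal_inf (EFin @` Sset F) \is a fin_num ->
     (ereal_inf (EFin @` Sset F) < ereal_inf (EFin @` Sset G))%E).
Proof.
move=> Fcx Fcl Gc Fh G0 cmp.
have sub : Sset G `<=` Sset F.
  move=> l [hl [x [hx e]]]; apply: (@inS R F l x) => //; [exact: cmp|exact: Fh].
split; first by apply: ereal_inf_le_tmp; exact: image_subset.
move=> fin.
have [ne|emp] := pselect (Sset G !=set0); last first.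
  have -> : Sset G = set0 by apply/seteqP; split => // l Gl; apply: emp; exists l.
  rewrite image_set0 ereal_inf0.
  by move/fin_numPlt: fin => /andP[].
have cl := @Sset_closed R G Gc.
have hlb : has_lbound (Sset G) by exists 0 => l [/andP[]].
set L := inf (Sset G).
have LS : Sset G L.
  apply: (itv_closed_infimums ne cl); split.
    exact: ge_inf.
  by move=> y hy; exact: lb_le_inf.
have infG : ereal_inf (EFin @` Sset G) = L%:E.
  apply/eqP; rewrite eq_le; apply/andP; split.
    by apply: ereal_inf_lbound; exists L.
  apply: le_ereal_inf_tmp => _ [y hy <-]; rewrite lee_fin; exact: ge_inf hlb y hy.
rewrite infG.
case: (LS) => /andP[L0 L1] [x [hx e]].
have Lpos : 0 < L.
  rewrite lt_neqAle L0 andbT; apply/eqP => L0'.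
  by move: (G0 x hx); rewrite L0' e eqxx.
have FL := cmp L x (introT andP (conj L0 L1)) hx e.
have near : \forall l \near L, F l x < x.
  exact: (@cvgr_lt R R (nbhs L) _ (F^~ x) (F L x) (Fcl x L) x FL).
case/nbhs_ballP: near => eps eps0 He.
set l' := L - minr eps L / 2.
have hm1 : minr eps L <= eps by rewrite ge_min lexx.
have hm2 : minr eps L <= L by rewrite ge_min lexx orbT.
have hm0 : 0 < minr eps L by rewrite lt_min eps0 Lpos.
have Fl' : F l' x < x.
  apply: He; rewrite /ball /= /l' opprB addrC subrK ger0_norm; last lra.
  lra.
have Sl' : Sset F l'.
  apply: (@inS R F l' x) => //; last by apply: Fh; apply/andP; split; rewrite /l'; lra.
  by apply/andP; split; rewrite /l'; lra.
apply: (le_lt_trans (y := l'%:E)).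
  by apply: ereal_inf_lbound; exists l'.
by rewrite lte_fin /l'; lra.
Qed.

Definition Phi {R : realType} (q : R) K C p := (q + C%:R * Mq K q p) / (1 + C%:R).

Lemma phiE' {R : realType} (q : R) K C lam x :
  phi_maj q K C lam x = Phi q K C (lam * x + (1 - lam) * q).
Proof. exact: phiE. Qed.

Lemma cadd {R : realType} {T : topologicalType} (f g : T -> R) x :
  {for x, continuous f} -> {for x, continuous g} -> {for x, continuous (fun y => f y + g y)}.
Proof. exact: continuousD. Qed.
Lemma cmul {R : realType} {T : topologicalType} (f g : T -> R) x :
  {for x, continuous f} -> {for x, continuous g} -> {for x, continuous (fun y => f y * g y)}.
Proof. exact: continuousM. Qed.
Lemma csub {R : realType} {T : topologicalType} (f g : T -> R) x :
  {for x, continuous f} -> {for x, continuous g} -> {for x, continuous (fun y => f y - g y)}.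
Proof. exact: continuousB. Qed.

Lemma sum_cont {R : realType} (I : Type) (r : seq I) (P : pred I) (f : I -> R -> R) :
  (forall i, continuous (f i)) -> continuous (fun p => \sum_(i <- r | P i) f i p).
Proof.
move=> fc; elim: r => [|a r IH].
  under eq_fun do rewrite big_nil; exact: cst_continuous.
under eq_fun do rewrite big_cons.
case: (P a) => //.
by move=> p; apply: continuousD; [exact: fc | exact: IH].
Qed.

Lemma bp_cont {R : realType} n k : continuous (fun p : R => binom_prob n k p).
Proof.
move=> p; rewrite /binom_prob.
apply: (@cmul R R (fun p : R => 'C(n, k)%:R * p ^+ k) (fun p => (1 - p) ^+ (n - k))).
  apply: (@cmul R R (fun p : R => 'C(n, k)%:R) (fun p => p ^+ k)).
    exact: cst_continuous.
  exact: exprn_continuous.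
apply: (@continuous_comp _ _ _ (fun p : R => 1 - p) (fun y => y ^+ (n - k))).
  by apply: continuousB; [exact: cst_continuous | exact: cvg_id].
exact: exprn_continuous.
Qed.

Lemma Mq_cont {R : realType} K (q : R) : continuous (Mq K q).
Proof.
move=> p; rewrite /Mq; apply: continuousD.
  by apply: sum_cont => i; exact: bp_cont.
case: (odd K) => /=; first exact: cst_continuous.
apply: (@cmul R R (fun=> q) (binom_prob K K./2)); first exact: cst_continuous.
exact: bp_cont.
Qed.

Lemma Phi_cont {R : realType} (q : R) K C : continuous (Phi q K C).
Proof.
move=> p; rewrite /Phi.
apply: (@cmul R R (fun p => q + C%:R * Mq K q p) (fun=> (1 + C%:R)^-1)); last exact: cst_continuous.
apply: (@cadd R R (fun=> q) (fun p => C%:R * Mq K q p)); first exact: cst_continuous.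
apply: (@cmul R R (fun=> C%:R) (Mq K q)); first exact: cst_continuous.
exact: Mq_cont.
Qed.

Lemma phi_cont_x {R : realType} (q : R) K C l : continuous (phi_maj q K C l).
Proof.
have -> : phi_maj q K C l = Phi q K C \o (fun x => l * x + (1 - l) * q).
  by apply: funext => x; rewrite phiE'.
move=> x; apply: continuous_comp; last exact: Phi_cont.
apply: (@cadd R R (fun x => l * x) (fun=> (1 - l) * q)); last exact: cst_continuous.
apply: (@cmul R R (fun=> l) id); [exact: cst_continuous | exact: cvg_id].
Qed.

Lemma phi_cont_l {R : realType} (q : R) K C x : continuous (fun l => phi_maj q K C l x).
Proof.
have -> : (fun l => phi_maj q K C l x) = Phi q K C \o (fun l => l * x + (1 - l) * q).
  by apply: funext => l; rewrite phiE'.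
move=> l; apply: continuous_comp; last exact: Phi_cont.
apply: (@cadd R R (fun l => l * x) (fun l => (1 - l) * q)).
  apply: (@cmul R R id (fun=> x)); [exact: cvg_id | exact: cst_continuous].
apply: (@cmul R R (fun l => 1 - l) (fun=> q)); last exact: cst_continuous.
apply: (@csub R R (fun=> 1) id); [exact: cst_continuous | exact: cvg_id].
Qed.

Lemma phi_cont {R : realType} (q : R) K C :
  continuous (fun z : R * R => phi_maj q K C z.1 z.2).
Proof.
have -> : (fun z : R * R => phi_maj q K C z.1 z.2) =
   Phi q K C \o (fun z : R * R => z.1 * z.2 + (1 - z.1) * q).
  by apply: funext => z; rewrite phiE'.
move=> z; apply: continuous_comp; last exact: Phi_cont.
apply: (@cadd R (R * R)%type (fun z : R * R => z.1 * z.2) (fun z : R * R => (1 - z.1) * q)).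
  apply: (@cmul R (R * R)%type (fun z : R * R => z.1) (fun z : R * R => z.2)); [exact: cvg_fst | exact: cvg_snd].
apply: (@cmul R (R * R)%type (fun z : R * R => 1 - z.1) (fun=> q)); last exact: cst_continuous.
apply: (@csub R (R * R)%type (fun=> 1) (fun z : R * R => z.1)); [exact: cst_continuous | exact: cvg_fst].
Qed.

Lemma bp_ratio' {R : realType} n k (p : R) : (n - k = k.+1)%N ->
  (1 - p) * binom_prob n k.+1 p = p * binom_prob n k p.
Proof.
move=> e; have r := @bp_ratio R n k p; rewrite e in r.
apply: (@mulIf _ (k.+1%:R)); first by rewrite pnatr_eq0.
by rewrite r.
Qed.

Lemma half_odd m : ((m.*2).+1)./2 = m.
Proof. exact: (half_bit_double m true). Qed.

Lemma half_even m : (m.*2)./2 = m.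
Proof. exact: (half_bit_double m false). Qed.

Lemma M_iv {R : realType} m (q p : R) : 0 < p < 1 -> 1/2 < q ->
  Mq (m.*2.+1) q p < Mq (m.*2.+2) q p.
Proof.
move=> /andP[p0 p1] hq.
have h2 : (m.*2.+2)./2 = m.+1 by rewrite -doubleS half_even.
rewrite /Mq h2 half_odd /= odd_double /=.
rewrite (@T_S R (m.*2.+1) m.+1 p) (@bp_SS R (m.*2.+1) m p) (@T_split R (m.*2.+1) m.+1 p).
have r := @bp_ratio' R (m.*2.+1) m p.
have {}r : (1 - p) * binom_prob m.*2.+1 m.+1 p = p * binom_prob m.*2.+1 m p.
  by apply: r; rewrite -addnn; lia.
have b0 : 0 < binom_prob m.*2.+1 m p.
  by apply: bp_gt0; [apply/andP; split|rewrite -addnn; lia].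
have : 0 < p * binom_prob m.*2.+1 m p * (2 * q - 1).
  by apply: mulr_gt0; [apply: mulr_gt0|lra].
nra.
Qed.

Lemma M_v {R : realType} m (q p : R) : 0 < p < 1 -> p < q ->
  Mq (m.*2.+1) q p < Mq (m.*2) q p.
Proof.
move=> hp pq.
rewrite /Mq half_odd half_even /= odd_double /=.
rewrite (@T_S R (m.*2) m p).
have b0 : 0 < binom_prob m.*2 m p by apply: bp_gt0 => //; rewrite -addnn; lia.
have : 0 < (q - p) * binom_prob m.*2 m p by apply: mulr_gt0 => //; lra.
nra.
Qed.

Lemma M_iii_odd {R : realType} m (q p : R) : 0 < p < 1/2 ->
  Mq (m.*2.+3) q p < Mq (m.*2.+1) q p.
Proof.
move=> /andP[p0 p1].
have h3 : (m.*2.+3)./2 = m.+1 by rewrite -doubleS half_odd.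
rewrite /Mq h3 half_odd /= odd_double /=.
set n := m.*2.+1.
rewrite (@T_S R n.+1 m.+1 p) (@T_S R n m.+1 p) (@bp_SS R n m p) (@T_split R n m.+1 p).
have r : (1 - p) * binom_prob n m.+1 p = p * binom_prob n m p.
  by apply: bp_ratio'; rewrite /n -addnn; lia.
have b0 : 0 < binom_prob n m p.
  by apply: bp_gt0; [apply/andP; split; lra|rewrite /n -addnn; lia].
have r2 : (1 - p) * ((1 - p) * binom_prob n m.+1 p) = (1 - p) * (p * binom_prob n m p) by rewrite r.
have : 0 < p * binom_prob n m p * (1 - 2 * p).
  by apply: mulr_gt0; [apply: mulr_gt0|lra].
nra.
Qed.

Lemma M_iii_even {R : realType} m (q p : R) : 0 < p < 1/2 -> 1/2 < q < 1 ->
  Mq ((m.+1).*2.+2) q p < Mq ((m.+1).*2) q p.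
Proof.
move=> /andP[p0 p1] /andP[q0 q1].
have h3 : ((m.+1).*2.+2)./2 = m.+2 by rewrite -doubleS half_even.
rewrite /Mq h3 half_even /= odd_double /=.
set n := (m.+1).*2.
rewrite (@T_S R n.+1 m.+2 p) (@T_S R n m.+2 p) (@bp_SS R n.+1 m.+1 p).
rewrite (@bp_SS R n m.+1 p) (@bp_SS R n m p) (@T_split R n m.+2 p).
set a := binom_prob n m p; set b := binom_prob n m.+1 p; set c := binom_prob n m.+2 p.
set t := T n m.+3 p.
set mu : R := m.+1%:R.
have X1 : (1 - p) * c * (mu + 1) = p * b * mu.
  have := @bp_ratio R n m.+1 p; rewrite -/b -/c.
  have -> : (n - m.+1 = m.+1)%N by rewrite /n -addnn; lia.
  by rewrite /mu -natr1.
have X2 : p * a * (mu + 1) = (1 - p) * b * mu.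
  have := @bp_ratio R n m p; rewrite -/b -/a.
  have -> : (n - m = m.+2)%N by rewrite /n -addnn; lia.
  by rewrite /mu -[m.+2%:R]natr1 => ->.
have b0 : 0 < b.
  by apply: bp_gt0; [apply/andP; split; lra|rewrite /n -addnn; lia].
have mu0 : 0 <= mu by rewrite /mu ler0n.
set W := mu * p * (1 - p) * (2 * q - 1) + (mu + 1) * (p ^+ 2 + 2 * q * p * (1 - p) - q).
have hW : W < 0.
  have e : W = (mu + 1) * ((p - 1/2) * (2 * p + 2 * q * (1 - 2 * p))) - p * (1 - p) * (2 * q - 1).
    by rewrite /W; field.
  have h1 : 0 < 2 * p + 2 * q * (1 - 2 * p) by nra.
  have h2 : (p - 1/2) * (2 * p + 2 * q * (1 - 2 * p)) < 0 by nra.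
  have h4 : 0 < p * (1 - p) * (2 * q - 1) by apply: mulr_gt0; [apply: mulr_gt0|]; lra.
  rewrite e; nra.
set D := (t + p * c + p * ((1 - p) * c + p * b) +
   q * ((1 - p) * ((1 - p) * c + p * b) + p * ((1 - p) * b + p * a)))
   - (c + t + q * b).
have E : (mu + 1) * D = b * W + (- (1 - q) * (1 - p)) * ((1 - p) * c * (mu + 1) - p * b * mu)
                         + q * p * (p * a * (mu + 1) - (1 - p) * b * mu).
  by rewrite /D /W; ring.
rewrite X1 X2 !subrr !mulr0 !addr0 in E.
have : D < 0.
  have : (mu + 1) * D < 0 by rewrite E pmulr_rlt0.
  by rewrite pmulr_rlt0 //; lra.
rewrite /D; lra.
Qed.

Lemma lamE {R : realType} (q : R) K C :
  lambda_star q K C = ereal_inf (EFin @` Sset (phi_maj q K C)).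
Proof. by []. Qed.

Lemma Phi_gt_half {R : realType} (q : R) K C p : admissible q K C -> 1/2 <= p <= 1 ->
  1/2 < Phi q K C p.
Proof.
move=> [/andP[q0 q1] [C1 _]] hp.
have hM := @Mq_ge_half R K q p hp (introT andP (conj (ltW q0) (ltW q1))).
have hC : 1 <= C%:R :> R by rewrite ler1n.
rewrite /Phi ltr_pdivlMr; last lra.
nra.
Qed.

Lemma Phi_ltM {R : realType} (q : R) K K' C p : (1 <= C)%N ->
  Mq K q p < Mq K' q p -> Phi q K C p < Phi q K' C p.
Proof.
move=> C1 hM; have hC : 1 <= C%:R :> R by rewrite ler1n.
rewrite /Phi ltr_pM2r; last by rewrite invr_gt0; lra.
by rewrite ltrD2l ltr_pM2l //; lra.
Qed.

Lemma fix_facts {R : realType} (q : R) K C l x : admissible q K C ->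
  0 <= l <= 1 -> 0 <= x <= 1/2 -> phi_maj q K C l x = x ->
  [/\ 0 < l * x + (1 - l) * q, l * x + (1 - l) * q < 1/2, l * x + (1 - l) * q < q &
      q + C%:R * Mq K q (l * x + (1 - l) * q) = (1 + C%:R) * x].
Proof.
move=> adm /andP[l0 l1] /andP[x0 x1]; rewrite phiE'.
have adm' := adm; case: adm' => [/andP[q0 q1] [C1 _]].
have hC : 1 <= C%:R :> R by rewrite ler1n.
set p := l * x + (1 - l) * q => e.
have p0 : 0 <= p by rewrite /p; nra.
have p1 : p <= 1 by rewrite /p; nra.
have ph : p < 1/2.
  rewrite ltNge; apply/negP => hp.
  have := @Phi_gt_half R q K C p adm (introT andP (conj hp p1)); lra.
have lpos : 0 < l.
  rewrite lt_neqAle l0 andbT; apply/eqP => l0'.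
  by move: ph; rewrite /p -l0' mul0r add0r subr0 mul1r; lra.
have hM : 0 <= Mq K q p by apply: Mq_ge0; [apply/andP; split|lra].
have eq : q + C%:R * Mq K q p = (1 + C%:R) * x.
  by rewrite -e /Phi; field; lra.
have xpos : 0 < x by nra.
split => //.
- by rewrite /p; nra.
- by rewrite /p; nra.
Qed.

Lemma case_gen {R : realType} (q : R) K C qG KG CG :
  admissible q K C -> admissible qG KG CG ->
  (forall l x, 0 <= l <= 1 -> 0 <= x <= 1/2 -> phi_maj qG KG CG l x = x ->
     phi_maj q K C l x < x) ->
  (lambda_star q K C <= lambda_star qG KG CG)%E /\
  (lambda_star q K C \is a fin_num -> (lambda_star q K C < lambda_star qG KG CG)%E).
Proof.
move=> aF aG cmp; rewrite !lamE; apply: compare => //.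
- exact: phi_cont_x.
- exact: phi_cont_l.
- exact: phi_cont.
- move=> l /andP[l0 l1]; rewrite phiE'; apply: Phi_gt_half => //.
  case: aF => [/andP[q0 q1] _]; apply/andP; split; nra.
- move=> x /andP[x0 x1]; rewrite phiE' mul0r subr0 mul1r add0r.
  have := @Phi_gt_half R qG KG CG qG aG.
  case: aG => [/andP[q0 q1] _] h.
  have {}h := h (introT andP (conj (ltW q0) (ltW q1))).
  by apply/eqP => e; lra.
Qed.

Lemma odd_form K : odd K -> K = (K./2).*2.+1.
Proof. by move=> hK; have := odd_double_half K; rewrite hK add1n. Qed.

Lemma even_form K : ~~ odd K -> K = (K./2).*2.
Proof. by move=> hK; have := odd_double_half K; rewrite (negbTE hK) add0n. Qed.

Local Close Scope classical_set_scope.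

Theorem proposition4 (R : realType) :
  (* (i) *)
  (forall (q q' : R) (K C : nat),
      admissible q K C -> admissible q' K C -> q < q' ->
      (lambda_star q K C <= lambda_star q' K C)%E /\
      (lambda_star q K C \is a fin_num ->
         (lambda_star q K C < lambda_star q' K C)%E)) /\
  (* (ii) *)
  (forall (q : R) (K C C' : nat),
      admissible q K C -> admissible q K C' -> (C' < C)%N ->
      (lambda_star q K C <= lambda_star q K C')%E /\
      (lambda_star q K C \is a fin_num ->
         (lambda_star q K C < lambda_star q K C')%E)) /\
  (* (iii) *)
  (forall (q : R) (K C : nat),
      admissible q K C -> admissible q (K - 2) C ->
      (lambda_star q K C <= lambda_star q (K - 2) C)%E /\
      (lambda_star q K C \is a fin_num ->
         (lambda_star q K C < lambda_star q (K - 2) C)%E)) /\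
  (* (iv) *)
  (forall (q : R) (K C : nat),
      admissible q K C -> admissible q K.+1 C -> odd K ->
      (lambda_star q K C <= lambda_star q K.+1 C)%E /\
      (lambda_star q K C \is a fin_num ->
         (lambda_star q K C < lambda_star q K.+1 C)%E)) /\
  (* (v) *)
  (forall (q : R) (K C : nat),
      admissible q K C -> admissible q K.-1 C -> odd K ->
      (lambda_star q K C <= lambda_star q K.-1 C)%E /\
      (lambda_star q K C \is a fin_num ->
         (lambda_star q K C < lambda_star q K.-1 C)%E)).
Proof.
split.
  move=> q q' K C aq aq' qq'; apply: case_gen => // l x hl hx e.
  have [p0 ph pq eqn] := @fix_facts R q' K C l x aq' hl hx e.
  apply: (@lt_le_trans _ _ (phi_maj q' K C l x)); last by rewrite e.
  case: aq => [/andP[q0 q1] [C1 _]].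
  case/andP: hl => l0 l1; case/andP: hx => x0 x1.
  have hC : 1 <= C%:R :> R by rewrite ler1n.
  rewrite !phiE' /Phi ltr_pM2r; last by rewrite invr_gt0; lra.
  set p1 := l * x + (1 - l) * q; set p2 := l * x + (1 - l) * q'.
  have h12 : p1 <= p2 by rewrite /p1 /p2; nra.
  have hp1 : 0 <= p1 by rewrite /p1; nra.
  have hp2 : p2 <= 1 by rewrite /p2; lra.
  have q01 : 0 <= q <= 1 by apply/andP; split; lra.
  have m1 := @Mq_mono_p R K q p1 p2 hp1 h12 hp2 q01.
  have m2 := @Mq_mono_q R K q q' p2 (introT andP (conj (le_trans hp1 h12) hp2)) (ltW qq').
  have : C%:R * Mq K q p1 <= C%:R * Mq K q' p2.
    by rewrite ler_wpM2l ?ler0n //; exact: le_trans m1 m2.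
  lra.
split.
  move=> q K C C' aC aC' CC'; apply: case_gen => // l x hl hx e.
  have [p0 ph pq eqn] := @fix_facts R q K C' l x aC' hl hx e.
  case: aC => [/andP[q0 q1] [C1 _]]; case: aC' => [_ [C1' _]].
  case/andP: hx => x0 x1.
  have hC : 1 <= C'%:R :> R by rewrite ler1n.
  have hCC : C'%:R < C%:R :> R by rewrite ltr_nat.
  rewrite phiE' /Phi ltr_pdivrMr; last lra.
  move: eqn; set M := Mq K q _ => eqn.
  have hxm : 0 < x - M by nra.
  have : 0 < (C%:R - C'%:R) * (x - M) by apply: mulr_gt0; lra.
  nra.
split.
  move=> q K C aK aK2.
  have [n eK] : exists n, K = n.+2.
    by exists (K - 2)%N; case: aK2 => [_ [C1 h]]; lia.
  subst K; have e2 : (n.+2 - 2 = n)%N by lia.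
  rewrite e2; rewrite e2 in aK2.
  apply: case_gen => // l x hl hx e.
  have [p0 ph pq eqn] := @fix_facts R q n C l x aK2 hl hx e.
  apply: (@lt_le_trans _ _ (phi_maj q n C l x)); last by rewrite e.
  case: aK2 => [/andP[q0 q1] [C1 n2]].
  rewrite !phiE'; apply: Phi_ltM => //.
  have hp : 0 < l * x + (1 - l) * q < 1 / 2 by apply/andP; split.
  case: (boolP (odd n)) => hn.
    rewrite (odd_form n hn); exact: M_iii_odd.
  have hn2 := even_form n hn.
  have [m hm] : exists m, n./2 = m.+1 by exists (n./2).-1; lia.
  rewrite hn2 hm; apply: M_iii_even => //; apply/andP; split => //.
split.
  move=> q K C aK aK1 hK; apply: case_gen => // l x hl hx e.
  have [p0 ph pq eqn] := @fix_facts R q K.+1 C l x aK1 hl hx e.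
  apply: (@lt_le_trans _ _ (phi_maj q K.+1 C l x)); last by rewrite e.
  case: aK1 => [/andP[q0 q1] [C1 n2]].
  rewrite !phiE'; apply: Phi_ltM => //.
  rewrite (odd_form K hK); apply: M_iv => //; apply/andP; split => //; lra.
move=> q K C aK aK1 hK; apply: case_gen => // l x hl hx e.
have [p0 ph pq eqn] := @fix_facts R q K.-1 C l x aK1 hl hx e.
apply: (@lt_le_trans _ _ (phi_maj q K.-1 C l x)); last by rewrite e.
case: aK1 => [/andP[q0 q1] [C1 n2]].
rewrite !phiE'; apply: Phi_ltM => //.
rewrite (odd_form K hK) /=; apply: M_v => //; apply/andP; split => //; lra.
Qed.
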